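(* Let $n\ge1$. Among the elements of $R$ whose binary representation has length $2n+5$, exactly one has binary representation beginning with $1000$, namely $[1000(10)^n0]_2$; moreover $[1000(10)^n0]_2$ is the smallest element of $R$ whose binary representation has length $2n+5$.
   Context: Stern's sequence $(a(n))_{n\ge0}$: $a(0)=0$, $a(1)=1$, $a(2n)=a(n)$, $a(2n+1)=a(n)+a(n+1)$; $s(n)=a(n+1)$. $R$ is the set of record-setters of $s$, i.e. indices $v\ge0$ with $s(i)<s(v)$ for all $i<v$. Binary representations have no leading zeros. For a binary string $x$, $[x]_2$ is the integer it represents in base 2; $x^i$ denotes $i$-fold concatenation. *)

(* Defs.v *)
From mathcomp Require Import all_boot.
Set Implicit Arguments. Unset Strict Implicit. Unset Printing Implicit Defensive.

(* Stern's diatomic sequence a(n), computed with fuel (fuel n suffices). *)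
Fixpoint sternF (k n : nat) : nat :=
  match k with
  | 0 => 0
  | k'.+1 => if n <= 1 then n
             else if odd n then sternF k' n./2 + sternF k' n./2.+1
             else sternF k' n./2
  end.
Definition stern (n : nat) : nat := sternF n n.

Definition s (n : nat) : nat := stern n.+1.

Definition record_setter (v : nat) : Prop := forall i, i < v -> s i < s v.

(* binary representation, most significant bit first, no leading zeros *)
Fixpoint binF (k v : nat) : seq bool :=
  match k with
  | 0 => [::]
  | k'.+1 => if v is 0 then [::] else rcons (binF k' v./2) (odd v)
  end.
Definition bin_of (v : nat) : seq bool := binF v v.

Definition bin_val (x : seq bool) : nat := foldl (fun acc (b : bool) => acc.*2 + nat_of_bool b) 0 x.

Definition w_str (n : nat) : seq bool :=
  [:: true; false; false; false] ++ flatten (nseq n [:: true; false]) ++ [:: false].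

Definition pre1000 : seq bool := [:: true; false; false; false].

(* Main.v *)
Require Import Defs.
From mathcomp Require Import all_boot zify.
Set Implicit Arguments. Unset Strict Implicit. Unset Printing Implicit Defensive.

Lemma sternF0 k : sternF k 0 = 0.
Proof. by case: k. Qed.

Lemma sternF_fuel k k' n : n <= k -> n <= k' -> sternF k n = sternF k' n.
Proof.
elim: k k' n => [|k IH] k' n Hk Hk'.
  have -> : n = 0 by lia.
  by rewrite !sternF0.
case: k' Hk' => [|k'] Hk'.
  have -> : n = 0 by lia.
  by rewrite !sternF0.
rewrite /=; case: ifP => // Hn.
case: ifP => Ho.
  by rewrite (IH k' n./2) ?(IH k' n./2.+1) //; lia.
by rewrite (IH k' n./2) //; lia.
Qed.

Lemma sternF_S k n : sternF k.+1 n =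
  if n <= 1 then n else if odd n then sternF k n./2 + sternF k n./2.+1 else sternF k n./2.
Proof. by []. Qed.

Lemma stern_rec n : 2 <= n ->
  stern n = if odd n then stern n./2 + stern n./2.+1 else stern n./2.
Proof.
case: n => [|k] // H.
rewrite {1}/stern sternF_S.
have -> : (k.+1 <= 1) = false by lia.
case: ifP => Ho.
  rewrite /stern (@sternF_fuel k (k.+1)./2) ?(@sternF_fuel k (k.+1)./2.+1) //; lia.
rewrite /stern (@sternF_fuel k (k.+1)./2) //; lia.
Qed.

Lemma stern_double m : stern m.*2 = stern m.
Proof.
case: m => [|m] //.
rewrite stern_rec; last by lia.
have -> : odd (m.+1).*2 = false by rewrite odd_double.
by rewrite doubleK.
Qed.

Lemma stern_odd m : stern m.*2.+1 = stern m + stern m.+1.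
Proof.
case: m => [|m] //.
rewrite stern_rec; last by lia.
have -> : odd (m.+1).*2.+1 = true by rewrite /= odd_double.
by have -> : (m.+1).*2.+1./2 = m.+1 by lia.
Qed.

Definition step (b : bool) (st : nat * nat) :=
  if b then (st.1 + st.2, st.2) else (st.1, st.1 + st.2).
Definition run (st : nat * nat) (x : seq bool) := foldl (fun st b => step b st) st x.

Lemma run_cat st x y : run st (x ++ y) = run (run st x) y.
Proof. by rewrite /run foldl_cat. Qed.

Lemma bin_val_rcons x b : bin_val (rcons x b) = (bin_val x).*2 + b.
Proof. by rewrite /bin_val -cats1 foldl_cat. Qed.

Lemma run_stern x : run (0,1) x = (stern (bin_val x), stern (bin_val x).+1).
Proof.
elim/last_ind: x => [|x b IH] //.
rewrite -cats1 run_cat IH cats1 bin_val_rcons.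
case: b => /=; rewrite /step /=.
  by rewrite addn1 stern_odd -doubleS stern_double.
by rewrite addn0 stern_double stern_odd.
Qed.

Lemma s_bin_val x : s (bin_val x) = (run (0,1) x).2.
Proof. by rewrite run_stern. Qed.

Lemma binF_fuel k k' v : v <= k -> v <= k' -> binF k v = binF k' v.
Proof.
elim: k k' v => [|k IH] k' v Hk Hk'.
  have -> : v = 0 by lia. by case: k' Hk'.
case: k' Hk' => [|k'] Hk'.
  have -> : v = 0 by lia. by [].
case: v Hk Hk' => [|v] Hk Hk' //=.
rewrite (IH k'); first by []. all: rewrite uphalf_half; lia.
Qed.

Lemma bin_of_rec v : 0 < v -> bin_of v = rcons (bin_of v./2) (odd v).
Proof.
case: v => [|v] // _.
by rewrite {1}/bin_of /= /bin_of (@binF_fuel v (v.+1)./2) //; lia.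
Qed.

Lemma bin_val_bin_of v : bin_val (bin_of v) = v.
Proof.
elim/ltn_ind: v => v IH.
case: (posnP v) => [->|Hv] //.
rewrite bin_of_rec // bin_val_rcons IH; last by lia.
lia.
Qed.

Lemma size_bin_le i k : i < 2 ^ k -> size (bin_of i) <= k.
Proof.
elim: k i => [|k IH] i H.
  by have -> : i = 0 by rewrite expn0 in H; lia.
case: (posnP i) => [->|Hi] //.
rewrite bin_of_rec // size_rcons ltnS IH //.
rewrite expnS in H; lia.
Qed.

Lemma bin_val_gen acc y :
  foldl (fun acc (b : bool) => acc.*2 + nat_of_bool b) acc y = acc * 2 ^ size y + bin_val y.
Proof.
elim: y acc => [|b y IH] acc /=; first by rewrite muln1 addn0.
rewrite /bin_val /= IH (IH (0.*2 + b)) expnS; lia.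
Qed.

Lemma bin_val_cat x y : bin_val (x ++ y) = bin_val x * 2 ^ size y + bin_val y.
Proof. by rewrite /bin_val foldl_cat bin_val_gen. Qed.

Lemma bin_val_cons b y : bin_val (b :: y) = b * 2 ^ size y + bin_val y.
Proof. by rewrite -cat1s bin_val_cat; case: b. Qed.

Lemma bin_val_lt x : bin_val x < 2 ^ size x.
Proof.
elim: x => [|b x IH] //.
rewrite bin_val_cons /= expnS; case: b => /=; lia.
Qed.

Lemma bin_of_bin_val x : bin_of (bin_val (true :: x)) = true :: x.
Proof.
elim/last_ind: x => [|x b IH] //.
rewrite -rcons_cons bin_val_rcons bin_of_rec; last first.
  rewrite bin_val_cons /=; have := expn_gt0 2 (size x); lia.
have -> : ((bin_val (true :: x)).*2 + b)./2 = bin_val (true :: x) by case: b; lia.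
have -> : odd ((bin_val (true :: x)).*2 + b) = b.
  by rewrite oddD odd_double; case: b.
by rewrite IH.
Qed.

Definition ten m := flatten (nseq m [:: true; false]).

Lemma tenS m : ten m.+1 = true :: false :: ten m.
Proof. by []. Qed.

Lemma size_ten m : size (ten m) = m.*2.
Proof. by elim: m => //= m ->. Qed.

Lemma ten_add k j : ten (k + j) = ten k ++ ten j.
Proof. by elim: k => // k IH; rewrite addSn !tenS IH. Qed.

Fixpoint fib n := match n with 0 => 0 | 1 => 1 | (m.+1 as p).+1 => fib p + fib m end.

Lemma fibSS n : fib n.+2 = fib n.+1 + fib n.
Proof. by []. Qed.

Lemma fib_mono n : fib n <= fib n.+1.
Proof. case: n => // n; rewrite fibSS; lia. Qed.

Lemma fib_pos n : 0 < n -> 0 < fib n.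
Proof.
elim: n => // n IH _; case: n IH => // n IH; rewrite fibSS; have := IH erefl; lia.
Qed.

Lemma fib_le m n : m <= n -> fib m <= fib n.
Proof.
move=> H; rewrite -(subnK H); elim: (n - m) => // d IH.
apply: (leq_trans IH); rewrite addSn; exact: fib_mono.
Qed.

Lemma run_10 p q : run (p, q) [:: true; false] = (p + q, p + q + q).
Proof. by []. Qed.

Lemma run_ten j p q : run (p, q) (ten j.+1) =
  (p * fib j.*2.+1 + q * fib j.*2.+2, p * fib j.*2.+2 + q * fib j.*2.+3).
Proof.
elim: j p q => [|j IH] p q; first by rewrite /run /step /=; f_equal; lia.
rewrite tenS (_ : true :: false :: _ = [:: true; false] ++ ten j.+1) // run_cat.
rewrite (_ : run (p, q) [:: true; false] = (p + q, p + q + q)) // IH.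
rewrite doubleS.
rewrite !fibSS; f_equal; lia.
Qed.

Lemma run_tenA m : run (0, 1) (ten m) = (fib m.*2, fib m.*2.+1).
Proof.
case: m => [|m] //; rewrite run_ten.
have -> : (m.+1).*2 = m.*2.+2 by lia.
f_equal; lia.
Qed.

Lemma run_tenB k : run (1, 4) (ten k) =
  (fib k.*2.+2 + 2 * fib k.*2, fib k.*2.+3 + 2 * fib k.*2.+1).
Proof.
case: k => [|k] //; rewrite run_ten.
have -> : (k.+1).*2 = k.*2.+2 by lia.
rewrite !fibSS; f_equal; lia.
Qed.

Lemma run_bound y x1 x2 M m :
  x1 <= M -> x2 <= M -> (x1 <= m) || (x2 <= m) ->
  (run (x1, x2) y).1 <= fib (size y).+1 * M + fib (size y) * m /\
  (run (x1, x2) y).2 <= fib (size y).+1 * M + fib (size y) * m.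
Proof.
elim: y x1 x2 M m => [|b y IH] x1 x2 M m H1 H2 H3.
  rewrite /run /=; lia.
rewrite (_ : run (x1,x2) (b::y) = run (step b (x1,x2)) y) // [size _]/= fibSS.
have := IH _ _ (M + m) M; rewrite /step.
case: b => /= HI.
  have := HI (x1 + x2) x2; lia.
have := HI x1 (x1 + x2); lia.
Qed.

Lemma bin_val1 b : bin_val [:: b] = b.
Proof. by case: b. Qed.

Lemma cat_lt p x y : size x = size y -> bin_val x < bin_val y ->
  bin_val (p ++ x) < bin_val (p ++ y).
Proof. by move=> Hs Hl; rewrite !bin_val_cat Hs ltn_add2l. Qed.

Lemma bv10 x : bin_val [:: true, false & x] = 2 ^ (size x).+1 + bin_val x.
Proof. by rewrite !bin_val_cons /= mul1n mul0n add0n. Qed.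

Lemma bv11 x : bin_val [:: true, true & x] = 2 ^ (size x).+1 + 2 ^ size x + bin_val x.
Proof. by rewrite !bin_val_cons /= !mul1n addnA. Qed.

Lemma run1 st b : run st [:: b] = step b st.
Proof. by []. Qed.

Lemma stepF x y : step false (x, y) = (x, x + y).
Proof. by []. Qed.
Lemma stepT x y : step true (x, y) = (x + y, y).
Proof. by []. Qed.
Lemma snd_pair (x y : nat) : (x, y).2 = y.
Proof. by []. Qed.

Lemma classify m z : size z = m.*2.+1 ->
  [\/ z = ten m ++ [:: false], z = ten m ++ [:: true],
      exists k j y, [/\ m = k + j.+1, size y = j.*2.+1 & z = ten k ++ [:: true, true & y]]
    | exists k j y, [/\ m = k + j.+1, size y = j.*2.+2 & z = ten k ++ false :: y]].
Proof.
elim: m z => [|m IH] z Hz.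
  case: z Hz => [|b [|]] //= _; case: b; [apply: Or42 | apply: Or41]; by [].
case: z Hz => [|b1 [|b2 z]] //= Hz.
case: b1.
  case: b2.
    apply: Or43; exists 0, m, z; split => //; lia.
  have Hz' : size z = m.*2.+1 by lia.
  case: (IH z Hz') => [->|->|[k [j [y [E1 E2 E3]]]]|[k [j [y [E1 E2 E3]]]]].
  - by apply: Or41.
  - by apply: Or42.
  - apply: Or43; exists k.+1, j, y; split => //; [lia | by rewrite E3].
  - apply: Or44; exists k.+1, j, y; split => //; [lia | by rewrite E3].
apply: Or44; exists 0, m, (b2 :: z); split => //=; lia.
Qed.

Lemma fib3 k : 3 * fib k.*2 <= 2 * fib k.*2.+1.
Proof.
case: k => [|k] //.
rewrite (_ : (k.+1).*2 = k.*2.+2); last by lia.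
rewrite !fibSS; have := fib_mono k.*2; lia.
Qed.

Lemma run_pre z : run (0, 1) (pre1000 ++ z) = run (1, 4) z.
Proof. by rewrite run_cat. Qed.

Lemma w_strE n : w_str n = pre1000 ++ (ten n ++ [:: false]).
Proof. by []. Qed.

Lemma sw n : s (bin_val (w_str n)) = fib n.*2.+2 + 2 * fib n.*2 + (fib n.*2.+3 + 2 * fib n.*2.+1).
Proof. by rewrite s_bin_val w_strE run_pre run_cat run_tenB. Qed.

Lemma main_class n z : 0 < n -> size z = n.*2.+1 ->
  [\/ bin_val (pre1000 ++ z) = bin_val (w_str n),
      bin_val (w_str n) < bin_val (pre1000 ++ z) /\
        s (bin_val (pre1000 ++ z)) < s (bin_val (w_str n))
    | s (bin_val (pre1000 ++ z)) <= fib (n.*2 + 5)].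
Proof.
move=> Hn Hz.
have Hsv : s (bin_val (pre1000 ++ z)) = (run (1, 4) z).2 by rewrite s_bin_val run_pre.
have Hwv : bin_val (w_str n) = bin_val (pre1000 ++ (ten n ++ [:: false])) by [].
case: (classify Hz) => [E|E|[k [j [y [E1 E2 E3]]]]|[k [j [y [E1 E2 E3]]]]].
- by apply: Or31; rewrite E.
- apply: Or32; split.
    rewrite Hwv E !bin_val_cat !size_cat !bin_val1 /=; lia.
  rewrite Hsv sw E run_cat run_tenB.
  have := fib_pos (n := n.*2.+2) erefl.
  move: (fib n.*2.+2) (fib n.*2) (fib n.*2.+3) (fib n.*2.+1) => a b c d /=; lia.
- apply: Or32; split.
    rewrite Hwv E3 E1 ten_add tenS -!catA.
    apply: cat_lt.
      by rewrite !size_cat /= !size_ten E2; lia.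
    apply: cat_lt.
      by rewrite !size_cat /= !size_ten E2; lia.
    rewrite !cat_cons bv10 bv11 E2.
    have H1 : size (ten j ++ [:: false]) = j.*2.+1 by rewrite size_cat size_ten /= addn1.
    have := bin_val_lt (ten j ++ [:: false]); rewrite H1 !expnS; lia.
  rewrite Hsv sw E3 run_cat run_tenB.
  set P := fib k.*2.+2 + 2 * fib k.*2; set Q := fib k.*2.+3 + 2 * fib k.*2.+1.
  rewrite (_ : run (P, Q) [:: true, true & y] = run (P + Q + Q, Q) y) //.
  have [_ Hb] := run_bound y (M := P + Q + Q) (m := Q) (leqnn _) (leq_addl _ _) (introT orP (or_intror (leqnn _))).
  apply: (leq_ltn_trans Hb).
  rewrite E2.
  have HW : fib n.*2.+2 + 2 * fib n.*2 + (fib n.*2.+3 + 2 * fib n.*2.+1)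
          = (run (P, Q) (ten j.+1 ++ [:: false])).2.
    by rewrite -sw w_strE s_bin_val run_pre E1 ten_add -catA run_cat run_tenB.
  rewrite HW run_cat run_ten run1 stepF snd_pair.
  have HP : 0 < P by rewrite /P; have := fib_pos (n := k.*2.+2) erefl; lia.
  have Hc : 0 < fib j.*2.+1 by apply: fib_pos.
  rewrite (fibSS j.*2.+1).
  move: (fib j.*2.+1) (fib j.*2.+2) Hc HP => c d Hc HP; nia.
- apply: Or33.
  rewrite Hsv E3 run_cat run_tenB.
  set P := fib k.*2.+2 + 2 * fib k.*2; set Q := fib k.*2.+3 + 2 * fib k.*2.+1.
  rewrite (_ : run (P, Q) (false :: y) = run (P, P + Q) y) //.
  have [_ Hb] := run_bound y (M := P + Q) (m := P) (leq_addr _ _) (leqnn _) (introT orP (or_introl (leqnn _))).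
  apply: (leq_trans Hb).
  have HE : ten n.+2 = ten k.+2 ++ ten j.+1 by rewrite -ten_add E1; f_equal; lia.
  have HF : fib (n.+2).*2.+1 = (run (0, 1) (ten n.+2)).2 by rewrite run_tenA.
  rewrite HE run_cat run_tenA run_ten snd_pair in HF.
  rewrite (_ : n.*2 + 5 = (n.+2).*2.+1); last by lia.
  rewrite HF E2 /P /Q.
  rewrite (_ : (k.+2).*2 = k.*2.+4); last by lia.
  have H3 := fib3 k.
  rewrite !fibSS.
  move: (fib k.*2) (fib k.*2.+1) (fib j.*2) (fib j.*2.+1) H3 => a b e f H3.
  nia.
Qed.

Lemma size_lo v L : size (bin_of v) = L.+1 -> 2 ^ L <= v.
Proof.
move=> H; rewrite leqNgt; apply/negP => /size_bin_le; rewrite H; lia.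
Qed.

Lemma v_lt v : v < 2 ^ size (bin_of v).
Proof. by rewrite -{1}(bin_val_bin_of v) bin_val_lt. Qed.

Lemma s_le_fib i N : size (bin_of i) <= N -> s i <= fib N.+1.
Proof.
move=> H; rewrite -(bin_val_bin_of i) s_bin_val.
have [_ Hb] := run_bound (bin_of i) (M := 1) (m := 0) (leq0n _) (leqnn _) (introT orP (or_introl (leqnn _))).
apply: (leq_trans Hb); rewrite muln1 muln0 addn0; exact: fib_le.
Qed.

Lemma pre_of v m : size (bin_of v) = m + 4 -> v < 9 * 2 ^ m ->
  exists z, bin_of v = pre1000 ++ z /\ size z = m.
Proof.
move=> Hs Hv.
have Hlo : 2 ^ m.+3 <= v by apply: size_lo; rewrite Hs; lia.
move: Hs Hv Hlo; rewrite -{2 3}(bin_val_bin_of v).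
case: (bin_of v) => [|b0 [|b1 [|b2 [|b3 z]]]] /= Hs; try (exfalso; lia).
have Hz : size z = m by lia.
have := bin_val_lt z; rewrite !bin_val_cons /= Hz !expnS.
case: b0; case: b1; case: b2; case: b3 => /= Hl Hv Hlo; try lia.
by exists z.
Qed.

Lemma sw_gt n : 0 < n -> fib (n.*2 + 5) < s (bin_val (w_str n)).
Proof.
move=> Hn; rewrite sw (_ : n.*2 + 5 = n.*2.+3.+2); last by lia.
have := fib_pos (n := n.*2) (ltac:(lia)).
rewrite !fibSS.
move: (fib n.*2) (fib n.*2.+1) => a b; lia.
Qed.

Lemma w_val n : bin_val (w_str n) = 8 * 2 ^ n.*2.+1 + bin_val (ten n ++ [:: false]).
Proof.
rewrite w_strE bin_val_cat size_cat size_ten /= addn1 (_ : bin_val pre1000 = 8) //.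
Qed.

Lemma w_bounds n : 2 ^ (n.*2 + 4) <= bin_val (w_str n) < 9 * 2 ^ n.*2.+1.
Proof.
rewrite w_val.
have := bin_val_lt (ten n ++ [:: false]).
rewrite size_cat size_ten /= addn1 (_ : n.*2 + 4 = n.*2.+1.+3); last by lia.
rewrite !expnS; lia.
Qed.

Lemma witness n : exists i0, i0 < 2 ^ (n.*2 + 4) /\ s i0 = fib (n.*2 + 5).
Proof.
exists (bin_val (ten n.+2)); split.
  have := bin_val_lt (ten n.+2); rewrite size_ten (_ : (n.+2).*2 = n.*2 + 4) //; lia.
rewrite s_bin_val run_tenA snd_pair; congr fib; lia.
Qed.

Lemma part4 n v : 1 <= n -> record_setter v -> size (bin_of v) = 2 * n + 5 ->
  prefix pre1000 (bin_of v) -> v = bin_val (w_str n).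
Proof.
move=> Hn Hr Hs /prefixP [z Hz].
have Hsz : size z = n.*2.+1 by move: Hs; rewrite Hz size_cat /=; lia.
have Hv : v = bin_val (pre1000 ++ z) by rewrite -Hz bin_val_bin_of.
have Hlo : 2 ^ (n.*2 + 4) <= v by apply: size_lo; rewrite Hs; lia.
case: (main_class Hn Hsz); rewrite -Hv => //.
  by case=> H1 H2; have := Hr _ H1; lia.
move=> H; have [i0 [Hi0 Hs0]] := witness n.
have := Hr i0 (leq_trans Hi0 Hlo); lia.
Qed.

Theorem mainTheorem16 (n : nat) : 1 <= n ->
  [/\ record_setter (bin_val (w_str n)),
      bin_of (bin_val (w_str n)) = w_str n,
      size (w_str n) = 2 * n + 5,
      (forall v, record_setter v -> size (bin_of v) = 2 * n + 5 ->
         prefix pre1000 (bin_of v) -> v = bin_val (w_str n))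
    & (forall v, record_setter v -> size (bin_of v) = 2 * n + 5 ->
         bin_val (w_str n) <= v)].
Proof.
move=> Hn.
have [Wlo Whi] := andP (w_bounds n).
have Wgt := sw_gt Hn.
split.
- move=> i Hi.
  case: (ltnP i (2 ^ (n.*2 + 4))) => Hi2.
    have := s_le_fib (N := n.*2 + 4) (size_bin_le Hi2).
    rewrite (_ : (n.*2 + 4).+1 = n.*2 + 5); last by lia.
    lia.
  have Hsz : size (bin_of i) = n.*2 + 5.
    apply/eqP; rewrite eqn_leq; apply/andP; split.
      apply: size_bin_le; rewrite (_ : n.*2 + 5 = (n.*2.+1 + 4)); last by lia.
      rewrite expnD (_ : 2 ^ 4 = 16) //; lia.
    rewrite leqNgt; apply/negP => H.
    have H' : size (bin_of i) <= n.*2 + 4 by lia.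
    have := v_lt i; have := leq_pexp2l (isT : 0 < 2) H'; lia.
  have Hs4 : size (bin_of i) = n.*2.+1 + 4 by rewrite Hsz; lia.
  have Hi9 : i < 9 * 2 ^ n.*2.+1 by lia.
  have [z [Hz Hz']] := pre_of Hs4 Hi9.
  have Hv : i = bin_val (pre1000 ++ z) by rewrite -Hz bin_val_bin_of.
  case: (main_class Hn Hz'); rewrite -Hv; lia.
- have -> : w_str n = true :: ([:: false; false; false] ++ ten n ++ [:: false]) by [].
  exact: bin_of_bin_val.
- by rewrite w_strE !size_cat size_ten /=; lia.
- by move=> v; apply: part4.
- move=> v Hr Hs.
  case: (ltnP v (9 * 2 ^ n.*2.+1)) => Hv; last by lia.
  have Hs4 : size (bin_of v) = n.*2.+1 + 4 by rewrite Hs; lia.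
  have [z [Hz Hz']] := pre_of Hs4 Hv.
  by rewrite (part4 Hn Hr Hs) // Hz prefix_prefix.
Qed.
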